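(* For all integers $n,k,d\ge1$ such that $k^{1/d}$ is an integer, the function $\textsc{Word}_{S_n,k}$ is computed by an $S_n^{k-1}$-invariant $\Sigma_{d+1}$ formula and by an $S_n^{k-1}$-invariant $\Pi_{d+1}$ formula, each of size $k\,n^{d(k^{1/d}-1)}$.
   Context: $\overline{S_n}$ is the set of $n\times n$ permutation matrices. $\textsc{Word}_{S_n,k}:\overline{S_n}^k\subseteq\{0,1\}^{kn^2}\to\{0,1\}$ maps $(M_1,\dots,M_k)$ to the $(1,1)$-entry of $M_1\cdots M_k$; the variables are $M_{i,a,b}$. $S_n^{k-1}$ acts on variables by $(g_1,\dots,g_{k-1})\cdot M_{i,a,b}=M_{i,g_{i-1}(a),g_i(b)}$ with $g_0=g_k=1$. An $\mathsf{AC}$ formula is a rooted tree with unordered children. Leaves are labeled $0,1,x_i,\neg x_i$, and gates are unbounded fan-in $\textsc{and}$/$\textsc{or}$. A $\Sigma_{d+1}$ (resp. $\Pi_{d+1}$) formula is an $\mathsf{AC}$ formula of depth at most $d+1$ whose output gate is $\textsc{or}$ (resp. $\textsc{and}$). Size is the number of literal leaves. A formula is $P$-invariant if relabeling literals by any $\pi\in P$ yields an isomorphic labeled tree. ''Computes'' means agreeing with the function on $\overline{S_n}^k$. *)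

(* Defs.v *)
From HB Require Import structures.
From mathcomp Require Import all_boot all_order all_algebra all_fingroup.
From Stdlib Require Import List Permutation.
Set Implicit Arguments. Unset Strict Implicit. Unset Printing Implicit Defensive.
Import GRing.Theory.
Local Open Scope ring_scope.

(* Variables M_{i,a,b}: index i : 'I_k stands for the paper's i+1 (0-based). *)
Definition var (k n : nat) := ('I_k * 'I_n * 'I_n)%type.

(* Children are stored in a list, but all notions below (size, depth, value)
   ignore the order, and isomorphism ([fiso]) is up to reordering children. *)
Inductive formula (V : Type) : Type :=
| FConst of bool
| FLit of V & bool
| FAnd of list (formula V)
| FOr of list (formula V).
Arguments FConst {V}.

Fixpoint feval (V : Type) (x : V -> bool) (f : formula V) : bool :=
  match f with
  | FConst b => b
  | FLit v p => if p then x v else ~~ x v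
  | FAnd l => seq.all (fun g => feval x g) l
  | FOr l => seq.has (fun g => feval x g) l
  end.

Fixpoint fsize (V : Type) (f : formula V) : nat :=
  match f with
  | FConst _ => 0
  | FLit _ _ => 1
  | FAnd l | FOr l => sumn (seq.map (fun g => fsize g) l)
  end.

Fixpoint fdepth (V : Type) (f : formula V) : nat :=
  match f with
  | FConst _ | FLit _ _ => 0
  | FAnd l | FOr l => (foldr maxn 0 (seq.map (fun g => fdepth g) l)).+1
  end.

Definition is_or (V : Type) (f : formula V) :=
  match f with FOr _ => true | _ => false end.
Definition is_and (V : Type) (f : formula V) :=
  match f with FAnd _ => true | _ => false end.

Definition Sigma_formula (V : Type) (d : nat) (f : formula V) :=
  (fdepth f <= d.+1)%N /\ is_or f.
Definition Pi_formula (V : Type) (d : nat) (f : formula V) :=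
  (fdepth f <= d.+1)%N /\ is_and f.

Fixpoint frelabel (V : Type) (s : V -> V) (f : formula V) : formula V :=
  match f with
  | FConst b => FConst b
  | FLit v p => FLit (s v) p
  | FAnd l => FAnd (List.map (fun g => frelabel s g) l)
  | FOr l => FOr (List.map (fun g => frelabel s g) l)
  end.

Inductive fiso (V : Type) : formula V -> formula V -> Prop :=
| fiso_const b : fiso (FConst b) (FConst b)
| fiso_lit v p : fiso (FLit v p) (FLit v p)
| fiso_and l1 l2 l2' : Permutation l2 l2' -> Forall2 (@fiso V) l1 l2' ->
    fiso (FAnd l1) (FAnd l2)
| fiso_or l1 l2 l2' : Permutation l2 l2' -> Forall2 (@fiso V) l1 l2' ->
    fiso (FOr l1) (FOr l2).

(* The action of (g_1, ..., g_{k-1}) in S_n^{k-1} on variables: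
   M_{i,a,b} |-> M_{i, g_{i-1}(a), g_i(b)} with g_0 = g_k = 1.
   Here g : 'I_k.-1 -> {perm 'I_n}, and g j is the paper's g_{j+1}. *)
Definition gext (k n : nat) (g : {ffun 'I_k.-1 -> {perm 'I_n}}) (j : nat)
  : {perm 'I_n} :=
  match insub j.-1 with
  | Some j' => if (0 < j)%N then g j' else 1%g
  | None => 1%g
  end.

Definition act_var (k n : nat) (g : {ffun 'I_k.-1 -> {perm 'I_n}})
  (v : var k n) : var k n :=
  let: (i, a, b) := v in (i, gext g i a, gext g i.+1 b).

Definition Pinvariant (k n : nat) (f : formula (var k n)) :=
  forall g : {ffun 'I_k.-1 -> {perm 'I_n}}, fiso (frelabel (act_var g) f) f.

Definition Mof (k n : nat) (x : var k n -> bool) (i : 'I_k) : 'M[int]_n :=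
  \matrix_(a, b) ((x (i, a, b) : nat)%:R).

Definition in_domain (k n : nat) (x : var k n -> bool) :=
  forall i : 'I_k, is_perm_mx (Mof x i).

Definition Word (k n : nat) (hn : (0 < n)%N) (x : var k n -> bool) : bool :=
  (\big[mulmx/1%:M]_(i < k) Mof x i) (Ordinal hn) (Ordinal hn) == 1.

Definition computes (k n : nat) (hn : (0 < n)%N) (f : formula (var k n)) :=
  forall x : var k n -> bool, in_domain x -> feval x f = Word hn x.

(* Main.v *)
Require Import Defs.
From Stdlib Require Import List Permutation.
From mathcomp Require Import all_boot all_order all_algebra all_fingroup.
From mathcomp Require Import zify.
Set Implicit Arguments. Unset Strict Implicit. Unset Printing Implicit Defensive.
Import GRing.Theory.

Lemma List_mapE (A B : Type) (f : A -> B) s : List.map f s = seq.map f s.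
Proof. by elim: s => //= x s ->. Qed.

Lemma Permutation_rem (T : eqType) (x : T) s : x \in s -> Permutation s (x :: rem x s).
Proof.
elim: s => //= y s IH; rewrite inE eq_sym; case: eqP => [-> _ | ne /= xs].
  by [].
apply: Permutation_trans (perm_swap _ _ _); apply: perm_skip; exact: IH.
Qed.

Lemma perm_eq_Permutation (T : eqType) (s1 s2 : seq T) : perm_eq s1 s2 -> Permutation s1 s2.
Proof.
elim: s1 s2 => [|x s1 IH] s2 H.
  by move/perm_size: H; case: s2 => [_|//]; constructor.
have xs2 : x \in s2 by rewrite -(perm_mem H) inE eqxx.
apply: Permutation_trans (Permutation_sym (Permutation_rem xs2)).
apply: perm_skip; apply: IH.
by rewrite -(perm_cons x); apply: perm_trans H (perm_to_rem xs2).
Qed.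

Definition lfiso (V : Type) (l1 l2 : list (formula V)) :=
  exists l2', Permutation l2 l2' /\ Forall2 (@fiso V) l1 l2'.

Lemma lfiso_app V (l1 l2 l3 l4 : list (formula V)) :
  lfiso l1 l2 -> lfiso l3 l4 -> lfiso (l1 ++ l3) (l2 ++ l4).
Proof.
move=> [l2' [P1 F1]] [l4' [P2 F2]]; exists (l2' ++ l4'); split.
  exact: Permutation_app.
exact: Forall2_app.
Qed.

Lemma lfiso_flatten V (I : eqType) (s : seq I) (f g : I -> list (formula V)) :
  (forall j, j \in s -> lfiso (f j) (g j)) ->
  lfiso (flatten (map f s)) (flatten (map g s)).
Proof.
elim: s => [|j s IH] H /=.
  by exists [::]; split; constructor.
apply: lfiso_app; first by apply: H; rewrite inE eqxx.
by apply: IH => i hi; apply: H; rewrite inE hi orbT.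
Qed.

Lemma Forall2_map (A B C : Type) (R : B -> C -> Prop) (f : A -> B) (g : A -> C) s :
  (forall a, R (f a) (g a)) -> Forall2 R (map f s) (map g s).
Proof. by move=> H; elim: s => //= a s IH; constructor. Qed.

Lemma all_flatten_map (A B : Type) (P : pred B) (f : A -> seq B) s :
  all P (flatten (map f s)) = all (fun j => all P (f j)) s.
Proof. by elim: s => //= a s <-; rewrite all_cat. Qed.

Lemma has_flatten_map (A B : Type) (P : pred B) (f : A -> seq B) s :
  has P (flatten (map f s)) = has (fun j => has P (f j)) s.
Proof. by elim: s => //= a s <-; rewrite has_cat. Qed.

Lemma foldr_maxn_le (A : Type) (f : A -> nat) l D :
  (foldr maxn 0 (map f l) <= D) = all (fun x => f x <= D) l.
Proof. by elim: l => //= a l <-; rewrite geq_max. Qed.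

Lemma sumn_map_const (A : Type) (f : A -> nat) c s :
  (forall a, f a = c) -> sumn (map f s) = size s * c.
Proof. by move=> H; elim: s => //= a s ->; rewrite H mulSn. Qed.

Definition node (n m : nat) (a b : 'I_n) (c : {ffun 'I_m.-1 -> 'I_n}) (j : nat) : 'I_n :=
  if j is j'.+1 then (if (insub j' : option 'I_m.-1) is Some o then c o else b) else a.

Fixpoint comp (n : nat) (pi : nat -> 'I_n -> 'I_n) (t L : nat) (a : 'I_n) : 'I_n :=
  if L is L'.+1 then pi (t + L') (comp pi t L' a) else a.

Lemma comp_add n (pi : nat -> 'I_n -> 'I_n) t L1 L2 a :
  comp pi t (L1 + L2) a = comp pi (t + L1) L2 (comp pi t L1 a).
Proof. by elim: L2 => [|L2 IH] /=; rewrite ?addn0 // addnS /= IH addnA. Qed.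

Definition valid n m (pi : nat -> 'I_n -> 'I_n) t L (a b : 'I_n) (c : {ffun 'I_m.-1 -> 'I_n}) :=
  all (fun j => comp pi (t + j * L) L (node a b c j) == node a b c j.+1) (iota 0 m.-1).

Lemma valid_canon n m pi t L (a b : 'I_n) (c : {ffun 'I_m.-1 -> 'I_n}) :
  valid pi t L a b c -> forall j, j < m -> node a b c j = comp pi t (j * L) a.
Proof.
move=> /allP V; elim=> [|j IH] hj; first by rewrite mul0n.
have hj' : j \in iota 0 m.-1 by rewrite mem_iota; apply/andP; split; lia.
have /eqP <- := V j hj'.
by rewrite IH ?(ltnW hj) // -comp_add mulSnr.
Qed.

Definition cstar n m (pi : nat -> 'I_n -> 'I_n) t L (a : 'I_n) : {ffun 'I_m.-1 -> 'I_n} :=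
  [ffun o : 'I_m.-1 => comp pi t (o.+1 * L) a].

Lemma node_cstar n m pi t L (a b : 'I_n) j : j < m ->
  node a b (cstar m pi t L a) j = comp pi t (j * L) a.
Proof.
case: j => [|j] hj /=; first by [].
case: insubP => [o _ <-|]; first by rewrite ffunE.
by move/negP; case; lia.
Qed.

Lemma valid_cstar n m pi t L (a b : 'I_n) : valid pi t L a b (cstar m pi t L a).
Proof.
apply/allP => j; rewrite mem_iota => /andP [_ hj].
rewrite !node_cstar; try lia.
by rewrite -comp_add -mulSnr.
Qed.

Definition gate (V : Type) (s : bool) (l : list (formula V)) : formula V :=
  if s then FAnd l else FOr l.

Fixpoint ch (k' n m l : nat) (s : bool) (t : nat) (a b : 'I_n) (p : bool) {struct l}
  : seq (formula (var k'.+1 n)) :=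
  match l with
  | 0 => [:: FLit (inord t, a, b) p]
  | l'.+1 =>
    [seq gate s (flatten [seq ch k' m l' (~~ s) (t + j * m ^ l') (node a b c j) (node a b c j.+1) s
                           | j <- iota 0 m.-1]
                 ++ ch k' m l' (~~ s) (t + m.-1 * m ^ l') (node a b c m.-1) b p)
    | c <- enum {ffun 'I_m.-1 -> 'I_n}]
  end.
Arguments ch k' {n} m l s t a b p.

Lemma ch_sem k' n m (x : var k'.+1 n -> bool) (pi : 'I_k'.+1 -> 'I_n -> 'I_n)
  (hx : forall i a b, x (i, a, b) = (pi i a == b)) (hm : 0 < m) l s t a b p :
  (if s then has (feval x) (ch k' m l s t a b p) else all (feval x) (ch k' m l s t a b p))
  = ((comp (fun t => pi (inord t)) t (m ^ l) a == b) == p).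
Proof.
set P := fun t => pi (inord t).
elim: l s t a b p => [|l IH] s t a b p.
  by case: s; case: p; rewrite /= ?orbF ?andbT hx ?addn0 ?eqb_id ?eqbF_neg.
have eL : m ^ l.+1 = m.-1 * m ^ l + m ^ l by rewrite expnS -mulSnr prednK.
case: s => /=.
- rewrite has_map; apply/hasP/idP.
  + move=> [c _] /=; rewrite all_cat all_flatten_map => /andP [V L].
    have V' : valid P t (m ^ l) a b c.
      apply/allP => j hj; move/allP: V => /(_ j hj).
      by rewrite (IH false) eqb_id.
    move: L; rewrite (IH false) (valid_canon V') ?prednK // -comp_add.
    by rewrite -eL.
  + move=> H; exists (cstar m P t (m ^ l) a); first by rewrite mem_enum.
    rewrite /= all_cat all_flatten_map; apply/andP; split.
      apply/allP => j hj; rewrite (IH false) eqb_id.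
      by move/allP: (valid_cstar m P t (m ^ l) a b) => /(_ j hj).
    by rewrite (IH false) node_cstar ?prednK // -comp_add -eL.
- rewrite all_map; apply/allP/idP.
  + move=> /(_ (cstar m P t (m ^ l) a)); rewrite mem_enum => /(_ isT) /=.
    rewrite has_cat has_flatten_map => /orP [].
      move=> /hasP [j hj]; rewrite (IH true) eqbF_neg.
      by move/allP: (valid_cstar m P t (m ^ l) a b) => /(_ j hj) ->.
    by rewrite (IH true) node_cstar ?prednK // -comp_add -eL.
  + move=> H c _ /=; rewrite has_cat has_flatten_map.
    case V : (valid P t (m ^ l) a b c).
      by rewrite (IH true) (valid_canon V) ?prednK // -comp_add -eL H orbT.
    apply/orP; left; apply/hasP; move/negbT: V => /allPn [j hj nj].
    by exists j => //; rewrite (IH true) eqbF_neg.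
Qed.

Lemma lfiso_gate V s (l1 l2 : list (formula V)) : lfiso l1 l2 -> fiso (gate s l1) (gate s l2).
Proof. by move=> [l' [P F]]; case: s; [apply: fiso_and P F | apply: fiso_or P F]. Qed.

Lemma frelabel_gate V (f : V -> V) s l : frelabel f (gate s l) = gate s (map (frelabel f) l).
Proof. by case: s; rewrite /= List_mapE. Qed.

Lemma node_sig k n m (g : {ffun 'I_k.-1 -> {perm 'I_n}}) t L (a b b' : 'I_n) (c : {ffun 'I_m.-1 -> 'I_n}) j :
  j < m ->
  node (gext g t a) b' [ffun o : 'I_m.-1 => gext g (t + o.+1 * L) (c o)] j = gext g (t + j * L) (node a b c j).
Proof.
case: j => [|j] hj /=; first by rewrite mul0n addn0.
case: insubP => [o _ e|]; first by rewrite ffunE e.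
by move/negP; case; lia.
Qed.

Lemma Forall2_map2 (A B C B' C' : Type) (R : B -> C -> Prop) (f : B' -> B) (h : A -> B') (g : C' -> C) (k : A -> C') s :
  (forall a, R (f (h a)) (g (k a))) -> Forall2 R (map f (map h s)) (map g (map k s)).
Proof. by move=> H; elim: s => //= a s IH; constructor. Qed.

Lemma lfiso_flatten2 V (I : eqType) (s : seq I) (f : formula V -> formula V) (h g : I -> list (formula V)) :
  (forall j, j \in s -> lfiso (map f (h j)) (g j)) ->
  lfiso (map f (flatten (map h s))) (flatten (map g s)).
Proof.
move=> H; rewrite map_flatten -map_comp; apply: lfiso_flatten => j hj; exact: H.
Qed.

Lemma perm_enum_inj (C : finType) (f : C -> C) : injective f -> perm_eq (enum C) (map f (enum C)).
Proof.
move=> inj.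
have U : uniq (map f (enum C)) by rewrite (map_inj_uniq inj) enum_uniq.
have [_ E] := uniq_min_size U (fun y _ => mem_enum C y)
   (eq_leq (esym (size_map f (enum C)))).
by apply: uniq_perm; [exact: enum_uniq | exact: U | move=> y; rewrite E].
Qed.

Lemma ch_inv k' n m (hm : 0 < m) (g : {ffun 'I_k'.+1.-1 -> {perm 'I_n}}) l s t (a b : 'I_n) p :
  t + m ^ l <= k'.+1 ->
  lfiso (map (frelabel (act_var g)) (ch k' m l s t a b p))
        (ch k' m l s t (gext g t a) (gext g (t + m ^ l) b) p).
Proof.
elim: l s t a b p => [|l IH] s t a b p hb.
  rewrite expn0 addn1 in hb *; rewrite /= inordK //.
  exists [:: FLit (inord t, gext g t a, gext g t.+1 b) p]; split.
    exact: Permutation_refl.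
  by constructor; constructor.
have eL : m ^ l.+1 = m.-1 * m ^ l + m ^ l by rewrite expnS -mulSnr prednK.
set L := m ^ l in eL *.
pose sig (c : {ffun 'I_m.-1 -> 'I_n}) : {ffun 'I_m.-1 -> 'I_n} :=
  [ffun o : 'I_m.-1 => gext g (t + o.+1 * L) (c o)].
have sig_inj : injective sig.
  move=> c1 c2 /ffunP E; apply/ffunP => o; have := E o; rewrite !ffunE.
  exact: perm_inj.
pose F (a b : 'I_n) (c : {ffun 'I_m.-1 -> 'I_n}) :=
  gate s (flatten [seq ch k' m l (~~ s) (t + j * L) (node a b c j) (node a b c j.+1) s
                           | j <- iota 0 m.-1]
                 ++ ch k' m l (~~ s) (t + m.-1 * L) (node a b c m.-1) b p).
have -> : forall a b, ch k' m l.+1 s t a b p = [seq F a b c | c <- enum {ffun 'I_m.-1 -> 'I_n}] by [].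
exists (map (F (gext g t a) (gext g (t + m ^ l.+1) b)) (map sig (enum {ffun 'I_m.-1 -> 'I_n}))); split.
  rewrite -!List_mapE; apply: Permutation_map; rewrite List_mapE.
  apply: perm_eq_Permutation; exact: (perm_enum_inj sig_inj).
apply: Forall2_map2 => c.
rewrite /F frelabel_gate; apply: lfiso_gate.
rewrite map_cat; apply: lfiso_app.
  apply: lfiso_flatten2 => j; rewrite mem_iota => /andP [_ hj].
  rewrite (node_sig g _ _ _ b) ?(node_sig g _ _ _ b); try lia.
  rewrite mulSnr addnA; apply: IH.
  have : j.+1 * L <= m * L by rewrite leq_mul2r; apply/orP; right; lia.
  rewrite mulSnr expnS -/L in hb *; lia.
rewrite (node_sig g _ _ _ b); try lia.
have -> : t + m ^ l.+1 = t + m.-1 * L + L by rewrite eL addnA.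
apply: IH; rewrite -addnA -eL //.
Qed.

Lemma ch_size k' n m (hm : 0 < m) l s t (a b : 'I_n) p :
  sumn (map (fun f => fsize f) (ch k' m l s t a b p)) = m ^ l * n ^ (l * m.-1).
Proof.
elim: l s t a b p => [|l IH] s t a b p; first by [].
rewrite /= -map_comp (@sumn_map_const _ _ (m * (m ^ l * n ^ (l * m.-1)))).
  rewrite -cardT card_ffun !card_ord expnS mulSn expnD.
  rewrite mulnCA mulnA mulnA mulnA; congr (_ * _); rewrite mulnC; lia.
move=> c; case: s => /=;
  rewrite map_cat sumn_cat map_flatten sumn_flatten -2!map_comp
     (@sumn_map_const _ _ (m ^ l * n ^ (l * m.-1))) ?size_map ?size_iota ?IH -?mulSnr ?prednK //;
  by move=> j /=; rewrite IH.
Qed.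

Lemma ch_depth k' n m l s t (a b : 'I_n) p :
  all (fun f => fdepth f <= l) (ch k' m l s t a b p).
Proof.
elim: l s t a b p => [|l IH] s t a b p; first by [].
rewrite /= all_map; apply/allP => c _ /=.
case: s => /=; rewrite ltnS foldr_maxn_le all_cat all_flatten_map IH andbT;
  by apply/allP => j _; rewrite IH.
Qed.

Lemma prod_perm_comp n K (sp : 'I_K.+1 -> {perm 'I_n}) L a : L <= K.+1 ->
  (\big[mulg/1%g]_(0 <= i < L) sp (inord i)) a = comp (fun t => sp (inord t)) 0 L a.
Proof.
elim: L => [|L IH] hL; first by rewrite big_geq // perm1.
by rewrite big_nat_recr //= permM IH ?(ltnW hL) // add0n.
Qed.

Lemma Word_perm k' n (hn : 0 < n) (x : var k'.+1 n -> bool) (sp : 'I_k'.+1 -> {perm 'I_n}) :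
  (forall i, Mof x i = perm_mx (sp i)) ->
  Word hn x = (comp (fun t => sp (inord t)) 0 k'.+1 (Ordinal hn) == Ordinal hn).
Proof.
move=> H; rewrite /Word (eq_bigr (fun i => perm_mx (sp i))) => [|i _]; last exact: H.
rewrite -(big_morph (@perm_mx int _) (@perm_mxM _ _) (@perm_mx1 _ _)).
have -> : \big[mulg/1%g]_(i < k'.+1) sp i = \big[mulg/1%g]_(0 <= i < k'.+1) sp (inord i).
  by rewrite big_mkord; apply: eq_bigr => i _; rewrite inord_val.
rewrite /perm_mx /row_perm !mxE prod_perm_comp //.
by case: (comp _ _ _ _ == _).
Qed.

Theorem lemma3p1 (n k d : nat) (hn : (0 < n)%N) (hk : (0 < k)%N) (hd : (0 < d)%N)
  (m : nat) (hm : k = (m ^ d)%N) :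
  (exists f : formula (var k n),
     Sigma_formula d f /\ Pinvariant f /\ computes hn f /\
     (fsize f <= k * n ^ (d * (m - 1)))%N) /\
  (exists f : formula (var k n),
     Pi_formula d f /\ Pinvariant f /\ computes hn f /\
     (fsize f <= k * n ^ (d * (m - 1)))%N).
Proof.
case: k hk hm => [//|k'] _ hm.
have hm0 : 0 < m by case: m hm => [|m'] //; rewrite exp0n.
set o := Ordinal hn.
have sub1 : m - 1 = m.-1 by rewrite subn1.
have ginv : forall g : {ffun 'I_k'.+1.-1 -> {perm 'I_n}}, gext g 0 = 1%g /\ gext g (m ^ d) = 1%g.
  move=> g; split; rewrite /gext; first by case: insub.
  rewrite -hm /=; case: insubP => [o' /= ho|] //; lia.
have dom : forall x, in_domain x -> exists sp : 'I_k'.+1 -> {perm 'I_n},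
    forall i, Mof x i = perm_mx (sp i).
  move=> x hx; exists (fun i => odflt 1%g [pick s | Mof x i == perm_mx s]) => i.
  case: pickP => [s /eqP -> //| H]; exfalso.
  by move: (hx i) => /is_perm_mxP [s E]; move: (H s); rewrite E eqxx.
have hxrel : forall x (sp : 'I_k'.+1 -> {perm 'I_n}), (forall i, Mof x i = perm_mx (sp i)) ->
    forall i a b, x (i, a, b) = (sp i a == b).
  move=> x sp H i a b; have := congr1 (fun M : 'M[int]_n => M a b) (H i).
  rewrite /Mof /perm_mx /row_perm !mxE.
  by case: (x (i, a, b)); case: (sp i a == b) => // /eqP.
have inv : forall s, Pinvariant (gate (~~ s) (ch k' m d s 0 o o true)).
  move=> s g; rewrite frelabel_gate; apply: lfiso_gate.
  have := @ch_inv _ _ _ hm0 g d s 0 o o true; rewrite add0n; have [-> ->] := ginv g; rewrite !perm1; apply.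
  by rewrite -hm.
have cmp : forall s, computes hn (gate (~~ s) (ch k' m d s 0 o o true)).
  move=> s x hx; have [sp H] := dom x hx.
  rewrite (Word_perm hn H); have := ch_sem (hxrel _ _ H) hm0 d s 0 o o true.
  by rewrite eqb_id -hm; case: s.
have sz : forall s, fsize (gate (~~ s) (ch k' m d s 0 o o true)) <= k'.+1 * n ^ (d * (m - 1)).
  by move=> s; rewrite sub1; case: s; rewrite /= ch_size // hm.
have dp : forall s, fdepth (gate (~~ s) (ch k' m d s 0 o o true)) <= d.+1.
  by move=> s; case: s; rewrite /= ltnS foldr_maxn_le ch_depth.
split.
  exists (gate false (ch k' m d true 0 o o true)); split; last split.
  - by split; [exact: (dp true) | ].
  - exact: (inv true).
  - by split; [exact: (cmp true) | exact: (sz true)].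
exists (gate true (ch k' m d false 0 o o true)); split; last split.
- by split; [exact: (dp false) | ].
- exact: (inv false).
- by split; [exact: (cmp false) | exact: (sz false)].
Qed.
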